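(* Let $\mathscr C$ be a directed cycle with node set $\{1,\dots,l\}$, each node $i$ carrying an integer label ${\rm label}(i)$ (different nodes may share a label). For a node $a$ of $\mathscr C$, let $a^-$ denote its predecessor in $\mathscr C$ (the unique node with an edge $a^-\to a$). Consider a random process $(i_k,j_k)_{k\ge1}$ of pairs of nodes of $\mathscr C$, with history $W_k=(i_\tau,j_\tau)_{\tau=1}^k$, such that for some $\gamma>0$ and all $k$: if ${\rm label}(i_k)\ne{\rm label}(j_k)$, then $(i_{k+1},j_{k+1})\in\{i_k,i_k^-\}\times\{j_k,j_k^-\}$ almost surely and $\mathbb P((i_{k+1},j_{k+1})=(i_k,j_k^-)\mid W_k)\ge\gamma$, $\mathbb P((i_{k+1},j_{k+1})=(i_k^-,j_k)\mid W_k)\ge\gamma$, $\mathbb P((i_{k+1},j_{k+1})\in\{(i_k,j_k),(i_k^-,j_k^-)\}\mid W_k)\ge\gamma$; if ${\rm label}(i_k)={\rm label}(j_k)$, then $\mathbb P((i_{k+1},j_{k+1})=(i_k,j_k)\mid W_k)=1$. Then there exist an integer $k^*>0$ and numbers $\mu_k\in(0,1)$ such that for every initial pair $(i_1,j_1)$, $\mathbb P({\rm label}(i_{k+1})={\rm label}(j_{k+1})\mid i_1,j_1)\ge\mu_k$ for all $k\ge k^*$. *)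

(* Defs.v *)
From HB Require Import structures.
From mathcomp Require Import all_boot all_order all_algebra.
From mathcomp Require Import all_classical all_reals all_analysis.
Set Implicit Arguments. Unset Strict Implicit. Unset Printing Implicit Defensive.
Import Order.TTheory GRing.Theory Num.Theory.
Local Open Scope classical_set_scope.

(* A directed cycle on the node set 'I_l, given by its predecessor map
   [pr] (the edges are  pr a -> a):  pr is a bijection with a single orbit. *)
Definition directed_cycle (l : nat) (pr : 'I_l -> 'I_l) : Prop :=
  injective pr /\ (forall a b : 'I_l, fconnect pr a b).

(* The event  {W_k = W_k(w0)} : the history (i_t, j_t), 1 <= t <= k,
   coincides with that of the outcome w0. *)
Definition hist_event (T : Type) (l : nat) (i j : nat -> T -> 'I_l)
    (k : nat) (w0 : T) : set T :=
  [set w | forall t, (1 <= t <= k)%N -> i t w = i t w0 /\ j t w = j t w0].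

Definition pair_event (T : Type) (l : nat) (i j : nat -> T -> 'I_l)
    (k : nat) (a b : 'I_l) : set T :=
  [set w | i k w = a /\ j k w = b].

(* Main.v *)
Require Import Defs.
From HB Require Import structures.
From mathcomp Require Import all_boot all_order all_algebra.
From mathcomp Require Import all_classical all_reals all_analysis.
From mathcomp Require Import zify.
Import Order.TTheory GRing.Theory Num.Theory.
Local Open Scope classical_set_scope.
Local Open Scope ring_scope.
Definition hist (T : Type) (l : nat) (i j : nat -> T -> 'I_l) (k : nat) (w : T)
  : {ffun 'I_k -> 'I_l * 'I_l} := [ffun t : 'I_k => (i t.+1 w, j t.+1 w)].
Arguments hist {T l}.

Lemma hist_eventE (T : Type) (l : nat) (i j : nat -> T -> 'I_l) k w0 w :
  hist_event i j k w0 w <-> hist i j k w = hist i j k w0.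
Proof.
split.
- move=> H; apply/ffunP => t; rewrite !ffunE.
  have [-> ->] := H t.+1 (ltn_ord t); done.
- move=> /ffunP H t /andP[t1 tk].
  have tk' : (t.-1 < k)%N by rewrite prednK.
  by have := H (Ordinal tk'); rewrite !ffunE /= prednK // => -[-> ->].
Qed.

Definition kdet (T : Type) (l : nat) (i j : nat -> T -> 'I_l) k (X : set T) :=
  forall w, X w -> hist_event i j k w `<=` X.
Arguments kdet {T l}.

Definition atomA (T : Type) (l : nat) (i j : nat -> T -> 'I_l) k (m : nat) : set T :=
  [set w | (enum_rank (hist i j k w) : nat) = m].
Arguments atomA {T l}.

Lemma decompZ (T : Type) (l : nat) (i j : nat -> T -> 'I_l) k (Z : set T) :
  Z = \big[setU/set0]_(m < #|{ffun 'I_k -> 'I_l * 'I_l}|) (Z `&` atomA i j k m).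
Proof.
rewrite -(bigcup_mkord _ (fun m => Z `&` atomA i j k m)); apply/seteqP; split.
- move=> w Zw; exists (enum_rank (hist i j k w) : nat) => //=.
- by move=> w [m _ []].
Qed.

Lemma atomA_triv (T : Type) (l : nat) (i j : nat -> T -> 'I_l) k (Z : set T) :
  trivIset setT (fun m => Z `&` atomA i j k m).
Proof. by move=> m1 m2 _ _ [w [[_ e1] [_ e2]]]; rewrite -e1 -e2. Qed.

Lemma atomA_cases (T : Type) (l : nat) (i j : nat -> T -> 'I_l) k (X : set T) m :
  kdet i j k X ->
  X `&` atomA i j k m = set0 \/ exists w0, X `&` atomA i j k m = hist_event i j k w0.
Proof.
move=> kX; case: (pselect (exists w0, (X `&` atomA i j k m) w0)) => [[w0 [Xw0 Aw0]]|nex].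
- right; exists w0; apply/seteqP; split.
  + move=> w [Xw Aw]; apply/hist_eventE; apply: enum_rank_inj; apply: val_inj.
    by rewrite /= Aw Aw0.
  + move=> w Hw; split; first exact: kX Hw.
    by move/hist_eventE: Hw; rewrite /atomA /= => ->.
- left; apply/seteqP; split => // w Fw; exfalso; apply: nex; by exists w.
Qed.
Arguments decompZ {T l}.
Arguments atomA_triv {T l}.
Arguments atomA_cases {T l i j k X}.
Arguments hist_eventE {T l}.
Lemma hist_meas {d} {T : measurableType d} {l} {i j : nat -> T -> 'I_l}
  (i_meas : forall k (a : 'I_l), measurable (i k @^-1` [set a]))
  (j_meas : forall k (a : 'I_l), measurable (j k @^-1` [set a])) k w0 :
  measurable (hist_event i j k w0).
Proof.
elim: k => [|k IH].
  have -> : hist_event i j 0 w0 = setT.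
    by apply/seteqP; split=> // w _ t /andP[t1 t0]; lia.
  exact: measurableT.
have -> : hist_event i j k.+1 w0 = hist_event i j k w0 `&`
    (i k.+1 @^-1` [set i k.+1 w0] `&` j k.+1 @^-1` [set j k.+1 w0]).
  apply/seteqP; split.
  - move=> w H; split; last by have [] := H k.+1 (leqnn _).
    by move=> t /andP[t1 tk]; apply: H; rewrite t1 /=; lia.
  - move=> w [H [/= e1 e2]] t /andP[t1 tk].
    have [->|ne] := eqVneq t k.+1; first by [].
    by apply: H; rewrite t1 /=; lia.
by apply: measurableI => //; apply: measurableI.
Qed.

Lemma atomA_meas {d} {T : measurableType d} {l} {i j : nat -> T -> 'I_l}
  (i_meas : forall k (a : 'I_l), measurable (i k @^-1` [set a]))
  (j_meas : forall k (a : 'I_l), measurable (j k @^-1` [set a])) k m :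
  measurable (atomA i j k m).
Proof.
have kT : kdet i j k setT by [].
case: (atomA_cases m kT) => [|[w0]]; rewrite setTI => ->; first exact: measurable0.
exact: hist_meas.
Qed.

Lemma kdet_meas {d} {T : measurableType d} {l} {i j : nat -> T -> 'I_l}
  (i_meas : forall k (a : 'I_l), measurable (i k @^-1` [set a]))
  (j_meas : forall k (a : 'I_l), measurable (j k @^-1` [set a])) k X :
  kdet i j k X -> measurable X.
Proof.
move=> kX; rewrite (decompZ i j k X); apply: bigsetU_measurable => m _.
case: (atomA_cases m kX) => [->|[w0 ->]]; first exact: measurable0.
exact: hist_meas.
Qed.

Lemma measure_decomp {d} {T : measurableType d} {R : realType} (P : probability T R)
  {l} {i j : nat -> T -> 'I_l}
  (i_meas : forall k (a : 'I_l), measurable (i k @^-1` [set a]))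
  (j_meas : forall k (a : 'I_l), measurable (j k @^-1` [set a])) k Z :
  measurable Z ->
  P Z = (\sum_(m < #|{ffun 'I_k -> 'I_l * 'I_l}|) P (Z `&` atomA i j k m))%E.
Proof.
move=> mZ; rewrite {1}(decompZ i j k Z).
apply: (measure_bigsetU P (F := fun m => Z `&` atomA i j k m)).
- by move=> m; apply: measurableI => //; exact: atomA_meas.
- exact: atomA_triv.
Qed.

Lemma atom_sum {d} {T : measurableType d} {R : realType} (P : probability T R)
  {l} {i j : nat -> T -> 'I_l}
  (i_meas : forall k (a : 'I_l), measurable (i k @^-1` [set a]))
  (j_meas : forall k (a : 'I_l), measurable (j k @^-1` [set a])) k (X Y : set T) (c : R) :
  0 <= c -> kdet i j k X -> measurable Y ->
  (forall w0, X w0 -> (c%:E * P (hist_event i j k w0) <= P (hist_event i j k w0 `&` Y))%E) ->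
  (c%:E * P X <= P (X `&` Y))%E.
Proof.
move=> c0 kX mY H.
have mX := kdet_meas i_meas j_meas _ _ kX.
rewrite (measure_decomp P i_meas j_meas k _ mX).
rewrite (measure_decomp P i_meas j_meas k _ (measurableI _ _ mX mY)).
rewrite ge0_sume_distrr; last by move=> m _; exact: measure_ge0.
apply: lee_sum => m _.
rewrite setIAC.
case: (atomA_cases m kX) => [->|[w0 e]].
  by rewrite set0I measure0 mule0.
rewrite e; apply: H.
have : (X `&` atomA i j k m) w0 by rewrite e.
by case.
Qed.
Theorem lemma5 (R : realType) (l : nat) (l_gt0 : (0 < l)%N)
  (pr : 'I_l -> 'I_l) (label : 'I_l -> int)
  (cyc : directed_cycle pr)
  (d : measure_display) (T : measurableType d) (P : probability T R)
  (i j : nat -> T -> 'I_l)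
  (i_meas : forall k (a : 'I_l), measurable (i k @^-1` [set a]))
  (j_meas : forall k (a : 'I_l), measurable (j k @^-1` [set a]))
  (gamma : R) (gamma_gt0 : 0 < gamma)
  (step_diff : forall (k : nat) (w0 : T), (1 <= k)%N ->
     label (i k w0) != label (j k w0) ->
     let H := hist_event i j k w0 in
     let a := i k w0 in let b := j k w0 in
     [/\ P (H `&` ~` [set w | (i k.+1 w == a) || (i k.+1 w == pr a)] ) = 0%E,
         P (H `&` ~` [set w | (j k.+1 w == b) || (j k.+1 w == pr b)] ) = 0%E,
         (gamma%:E * P H <= P (H `&` pair_event i j k.+1 a (pr b)))%E,
         (gamma%:E * P H <= P (H `&` pair_event i j k.+1 (pr a) b))%E &
         (gamma%:E * P H <= P (H `&` (pair_event i j k.+1 a b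
                                       `|` pair_event i j k.+1 (pr a) (pr b))))%E])
  (step_same : forall (k : nat) (w0 : T), (1 <= k)%N ->
     label (i k w0) = label (j k w0) ->
     let H := hist_event i j k w0 in
     P (H `&` pair_event i j k.+1 (i k w0) (j k w0)) = P H) :
  exists (kstar : nat) (mu : nat -> R),
    (0 < kstar)%N /\ (forall k, 0 < mu k < 1) /\
    forall (k : nat) (a b : 'I_l), (kstar <= k)%N ->
      (0 < P (pair_event i j 1 a b))%E ->
      ((mu k)%:E * P (pair_event i j 1 a b)
        <= P (pair_event i j 1 a b
               `&` [set w | label (i k.+1 w) = label (j k.+1 w)]))%E.
Proof.
pose c : R := Order.min gamma 2^-1.
have c0 : 0 < c by rewrite /c minEle; case: ifP => _ //; rewrite invr_gt0.
have cg : c <= gamma by rewrite /c minEle; case: ifP => // /negbT; rewrite -ltNge => /ltW.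
have c1 : c < 1.
  rewrite /c minEle; case: ifP => [/le_lt_trans|_]; last by rewrite invf_lt1 // ltr1n.
  by apply; rewrite invf_lt1 // ltr1n.
have cle : forall x : \bar R, (0 <= x)%E -> (c%:E * x <= x)%E.
  move=> x x0; rewrite -{2}(mul1e x); apply: lee_wpmul2r => //.
  by rewrite lee_fin ltW.
pose E k := [set w | label (i k w) = label (j k w)].
pose Y1 k := [set w | i k.+1 w = i k w /\ j k.+1 w = j k w].
pose Y2 k := [set w | i k.+1 w = pr (i k w) /\ j k.+1 w = j k w].
have kY1 : forall k, (1 <= k)%N -> kdet i j k.+1 (Y1 k).
  move=> k k1 w [e1 e2] w' H.
  have [a1 b1] : i k.+1 w' = i k.+1 w /\ j k.+1 w' = j k.+1 w by apply: H; rewrite /=; lia.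
  have [a2 b2] : i k w' = i k w /\ j k w' = j k w by apply: H; rewrite /=; lia.
  by rewrite /Y1 /= a1 b1 a2 b2.
have kY2 : forall k, (1 <= k)%N -> kdet i j k.+1 (Y2 k).
  move=> k k1 w [e1 e2] w' H.
  have [a1 b1] : i k.+1 w' = i k.+1 w /\ j k.+1 w' = j k.+1 w by apply: H; rewrite /=; lia.
  have [a2 b2] : i k w' = i k w /\ j k w' = j k w by apply: H; rewrite /=; lia.
  by rewrite /Y2 /= a1 b1 a2 b2.
have stepA : forall k X, (1 <= k)%N -> kdet i j k X -> X `<=` E k ->
    (P X <= P (X `&` Y1 k))%E.
  move=> k X k1 kX XE; rewrite -{1}(mul1e (P X)).
  apply: (atom_sum P i_meas j_meas k X (Y1 k) 1) => //.
    exact: (kdet_meas i_meas j_meas _ _ (kY1 k k1)).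
  move=> w0 Xw0; rewrite mul1e -(step_same k w0 k1 (XE _ Xw0)) /= le_eqVlt; apply/orP; left.
  apply/eqP; congr (P _); apply/seteqP; split => w [H Hw]; split => //.
  - have [a2 b2] := H k ltac:(rewrite /=; lia).
    by case: Hw => e1 e2; rewrite /pair_event /Y1 /Y2 /= e1 e2 a2 b2.
  - have [a2 b2] := H k ltac:(rewrite /=; lia).
    by case: Hw => e1 e2; rewrite /pair_event /Y1 /Y2 /= e1 e2 a2 b2.
have stepB : forall k X, (1 <= k)%N -> kdet i j k X -> X `<=` ~` E k ->
    (c%:E * P X <= P (X `&` Y2 k))%E.
  move=> k X k1 kX XE.
  apply: (atom_sum P i_meas j_meas k X (Y2 k)) => //.
    by apply: ltW.
    exact: (kdet_meas i_meas j_meas _ _ (kY2 k k1)).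
  move=> w0 Xw0.
  have ne : label (i k w0) != label (j k w0) by apply/eqP; exact: XE.
  have := step_diff k w0 k1 ne; cbv zeta => -[_ _ _ h4 _].
  have h : (c%:E * P (hist_event i j k w0) <= gamma%:E * P (hist_event i j k w0))%E.
    by apply: lee_wpmul2r; [exact: measure_ge0 | rewrite lee_fin].
  apply: (le_trans h); apply: (le_trans h4); rewrite le_eqVlt; apply/orP; left.
  apply/eqP; congr (P _); apply/seteqP; split => w [H Hw]; split => //.
  - have [a2 b2] := H k ltac:(rewrite /=; lia).
    by case: Hw => e1 e2; rewrite /pair_event /Y1 /Y2 /= e1 e2 a2 b2.
  - have [a2 b2] := H k ltac:(rewrite /=; lia).
    by case: Hw => e1 e2; rewrite /pair_event /Y1 /Y2 /= e1 e2 a2 b2.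
have kI : forall k (X Z : set T), kdet i j k X -> kdet i j k Z -> kdet i j k (X `&` Z).
  by move=> k X Z kX kZ w [Xw Zw] w' H; split; [exact: kX w Xw w' H | exact: kZ w Zw w' H].
have kE : forall k, (1 <= k)%N -> kdet i j k (E k).
  move=> k k1 w Ew w' H.
  have [a2 b2] : i k w' = i k w /\ j k w' = j k w by apply: H; rewrite /=; lia.
  by rewrite /E /= a2 b2.
have kEC : forall k, (1 <= k)%N -> kdet i j k (~` E k).
  move=> k k1 w Ew w' H.
  have [a2 b2] : i k w' = i k w /\ j k w' = j k w by apply: H; rewrite /=; lia.
  by rewrite /E /= a2 b2.
exists l, (fun k => c ^+ k.+1); split => //; split.
  by move=> k; rewrite exprn_gt0 //= exprn_ilt1 ?ltW.
move=> k a b lk PS.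
pose S := pair_event i j 1 a b.
pose N := findex pr a b.
have Nl : (N < l)%N.
  have := findex_max (cyc.2 a b).
  have : (order pr a <= l)%N by rewrite /order -[X in (_ <= X)%N]card_ord; exact: max_card.
  rewrite /N; lia.
pose G m := [set w | S w /\ (E m.+1 w \/ exists n, (n + m <= N)%N /\ iter n pr (i m.+1 w) = j m.+1 w)].
have kS : forall k, (1 <= k)%N -> kdet i j k S.
  move=> k' k1 w Sw w' H.
  have [a1 b1] : i 1 w' = i 1 w /\ j 1 w' = j 1 w by apply: H; rewrite /=; lia.
  by rewrite /S /pair_event /= a1 b1.
have kG : forall m, kdet i j m.+1 (G m).
  move=> m w [Sw Hw] w' H.
  have [a1 b1] : i 1 w' = i 1 w /\ j 1 w' = j 1 w by apply: H; rewrite /=; lia.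
  have [a2 b2] : i m.+1 w' = i m.+1 w /\ j m.+1 w' = j m.+1 w by apply: H; rewrite /=; lia.
  by rewrite /G /S /E /pair_event /= a1 b1 a2 b2; split.
have claim : forall m, ((c ^+ m.+1)%:E * P S <= P (G m))%E.
  elim=> [|m IH].
    rewrite expr1; apply: le_trans (cle _ (measure_ge0 _ _)) _.
    apply: le_measure; rewrite ?inE.
    - exact: (kdet_meas i_meas j_meas _ _ (kS 1%N isT)).
    - exact: (kdet_meas i_meas j_meas _ _ (kG 0%N)).
    - move=> w Sw; split => //; right; exists N; split; first by rewrite addn0.
      case: Sw => e1 e2; have e1' : i 1%N w = a := e1; have e2' : j 1%N w = b := e2.
      by rewrite e1' e2'; exact: iter_findex (cyc.2 a b).
  pose X1 := G m `&` E m.+1.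
  pose X2 := G m `&` ~` E m.+1.
  have kX1 : kdet i j m.+1 X1 by apply: kI => //; apply: kE.
  have kX2 : kdet i j m.+1 X2 by apply: kI => //; apply: kEC.
  have mX1 := kdet_meas i_meas j_meas _ _ kX1.
  have mX2 := kdet_meas i_meas j_meas _ _ kX2.
  have mY1 := kdet_meas i_meas j_meas _ _ (kY1 m.+1 isT).
  have mY2 := kdet_meas i_meas j_meas _ _ (kY2 m.+1 isT).
  have hA := stepA m.+1 X1 isT kX1 (fun w (h : X1 w) => proj2 h).
  have hB := stepB m.+1 X2 isT kX2 (fun w (h : X2 w) => proj2 h).
  have sub : (X1 `&` Y1 m.+1) `|` (X2 `&` Y2 m.+1) `<=` G m.+1.
    move=> w [[[[Sw _] Ew] [e1 e2]]|[[[Sw Hw] nE] [e1 e2]]]; rewrite /G /=; split => //.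
      by left; rewrite /E /= e1 e2.
    case: Hw => [//|[n [nm it]]].
    case: n nm it => [|n] nm it.
      by exfalso; apply: nE; rewrite /E /= -it.
    right; exists n; split; first lia.
    by rewrite e1 e2 -it iterSr.
  have mG := kdet_meas i_meas j_meas _ _ (kG m.+1).
  have disj : (X1 `&` Y1 m.+1) `&` (X2 `&` Y2 m.+1) = set0.
    by apply/seteqP; split => // w [[[_ e] _] [[_ ne] _]].
  have GU : P (G m) = (P X1 + P X2)%E.
    rewrite -measureU //; last by apply/seteqP; split => // w [[_ e] [_ ne]].
    by congr (P _); rewrite -setIUr setUCr setIT.
  apply: le_trans (le_measure _ _ _ sub); last by rewrite inE.
    2: by rewrite inE; apply: measurableU; apply: measurableI.
  rewrite measureU //; [|apply: measurableI => //..].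
  apply: le_trans (leeD hA hB).
  apply: le_trans (leeD (cle _ (measure_ge0 _ _)) (lexx _)).
  rewrite -ge0_muleDr ?measure_ge0 // -GU exprS EFinM -muleA.
  by apply: lee_wpmul2l; [rewrite lee_fin ltW|exact: IH].
apply: le_trans (claim k) _.
apply: le_measure; rewrite ?inE.
- exact: (kdet_meas i_meas j_meas _ _ (kG k)).
- apply: (kdet_meas i_meas j_meas _ _ (kI _ _ _ (kS k.+1 isT) (kE k.+1 isT))).
- move=> w [Sw [Ew|[n [nk _]]]]; first by split.
  exfalso; lia.
Qed.
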